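(* Let $f:\mathbb{C}^2\to\mathbb{C}^2$ be a generically non-proper polynomial map with support $A=(A_1,A_2)$, and let $\Gamma$ be a right (respectively left) long origin relevant face of $A$. Then $A$ has no right (respectively left) relevant face other than $\Gamma$.
   Context: $A_i=\operatorname{supp}f_i$. A face of a finite set $S\subset\mathbb{Z}^2$ is the set of points of $S$ minimizing $\langle\alpha,\cdot\rangle$ for some $\alpha\in\mathbb{R}^2$ (which supports it); a face of $A$ is a pair $\Gamma=(\Gamma_1,\Gamma_2)$ with $\Gamma_i$ the face of $A_i$ supported by a common $\alpha$. $\Gamma$ is origin if $(0,0)\in\Gamma_1$ and $(0,0)\in\Gamma_2$; semi-origin if $(0,0)\in\Gamma_1\cup\Gamma_2$; coordinate if every vector supporting it has one coordinate positive and the other zero; relevant if it is semi-origin, not coordinate, and no $\Gamma_i$ is a single point different from $(0,0)$. Supporting vectors $\alpha=(\alpha_1,\alpha_2)$ of relevant faces satisfy $\alpha_1\alpha_2<0$; a relevant face is left if $\alpha_1>0$ and right if $\alpha_1<0$. A face is long if $\dim\mathrm{conv}(\Gamma_1)=\dim\mathrm{conv}(\Gamma_2)=1$. With $V(B_1,B_2):=\mathrm{Vol}(\mathrm{conv}B_1+\mathrm{conv}B_2)-\mathrm{Vol}(\mathrm{conv}B_1)-\mathrm{Vol}(\mathrm{conv}B_2)$ and $\Sigma$ the support of $|\mathrm{Jac} f|$, $f$ is generically non-proper if it is dominant, non-proper (some $y$, $x_k$ with $\|x_k\|\to\infty$, $f(x_k)\to y$), $f(0,0)\in(\mathbb{C}^*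 )^2$, and the systems $f_1=f_2=0$, $f_1=|\mathrm{Jac} f|=0$, $f_2=|\mathrm{Jac} f|=0$ have respectively $V(A_1,A_2)$, $V(A_1,\Sigma)$, $V(A_2,\Sigma)$ isolated solutions in $(\mathbb{C}^* )^2$ (counted with multiplicity). *)

(* Defs.v *)
(* Polynomials in two
   variables x, y over C are represented as {poly {poly C}}: the outer
   variable is y, the inner one is x. *)
From mathcomp Require Import all_boot all_order all_algebra.
From mathcomp Require Import complex.
From mathcomp Require Import all_classical all_reals all_analysis.
Set Implicit Arguments.
Unset Strict Implicit.
Unset Printing Implicit Defensive.
Import Order.TTheory GRing.Theory Num.Theory.
Local Open Scope ring_scope.
Local Open Scope classical_set_scope.

Section Defs.
Variable R : realType.
Local Notation C := (complex R).

Definition poly2 := {poly {poly C}}.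

Definition coef2 (p : poly2) (i j : nat) : C := (p`_j)`_i.

Definition supp2 (p : poly2) : set (nat * nat) :=
  [set ij | coef2 p ij.1 ij.2 != 0].

Definition ev2 (p : poly2) (z : C * C) : C :=
  (map_poly (fun q : {poly C} => q.[z.1]) p).[z.2].

Definition dx (p : poly2) : poly2 := map_poly (fun q : {poly C} => deriv q) p.
Definition dy (p : poly2) : poly2 := deriv p.
Definition jac (f1 f2 : poly2) : poly2 := dx f1 * dy f2 - dy f1 * dx f2.

Definition comp2 (h g1 g2 : poly2) : poly2 :=
  \sum_(j < size h) \sum_(i < size h`_j)
     (coef2 h i j)%:P%:P * g1 ^+ i * g2 ^+ j.

Definition shift2 (p : poly2) (z : C * C) : poly2 :=
  comp2 p ('X%:P + (z.1)%:P%:P) ('X + (z.2)%:P%:P).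

Definition mono2 (a b : nat) : poly2 := ('X^a)%:P * 'X^b.

(* Matrix of the truncations to total degree < N of the polynomials
   u^a v^b g_i (a,b < N), written in the local coordinates u = x - z1,
   v = y - z2, in the monomial basis u^c v^d (c + d < N) of
   C[u,v]/m^N.  Its rank is the dimension of the image of the ideal
   (g1,g2) in C[x,y]/m_z^N. *)
Definition trunc_mx (g1 g2 : poly2) (N : nat) :
  'M[C]_(#|{: 'I_N * 'I_N * bool}|, #|{: 'I_N * 'I_N}|) :=
  \matrix_(r < #|{: 'I_N * 'I_N * bool}|, c < #|{: 'I_N * 'I_N}|)
    (let abi : 'I_N * 'I_N * bool := enum_val r in
     let cd : 'I_N * 'I_N := enum_val c in
     if (cd.1 + cd.2 < N)%N then
       coef2 ((if abi.2 then g1 else g2) * mono2 abi.1.1 abi.1.2) cd.1 cd.2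
     else 0).

Definition local_dim (g1 g2 : poly2) (z : C * C) (N : nat) : nat :=
  (#|[set cd : 'I_N * 'I_N | (cd.1 + cd.2 < N)%N]|
     - \rank (trunc_mx (shift2 g1 z) (shift2 g2 z) N))%N.

(* m is the intersection multiplicity at z, i.e. dim_C of the local algebra
   C[x,y]_{m_z}/(g1,g2), which for an isolated zero equals the stable value
   of dim_C C[x,y]/((g1,g2) + m_z^N) for N large *)
Definition has_mult (g1 g2 : poly2) (z : C * C) (m : nat) : Prop :=
  exists N0, forall N, (N0 <= N)%N -> local_dim g1 g2 z N = m.

Definition common_zero (g1 g2 : poly2) (z : C * C) : Prop :=
  ev2 g1 z = 0 /\ ev2 g2 z = 0.

Definition in_torus (z : C * C) : Prop := z.1 != 0 /\ z.2 != 0.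

Definition isolated_zero (g1 g2 : poly2) (z : C * C) : Prop :=
  common_zero g1 g2 z /\
  exists eps : C, 0 < eps /\
    forall w, common_zero g1 g2 w ->
      `|w.1 - z.1| < eps -> `|w.2 - z.2| < eps -> w = z.

Definition n_isolated_sols (g1 g2 : poly2) (n : nat) : Prop :=
  exists s : seq (C * C),
    uniq s /\
    (forall z, z \in s <-> in_torus z /\ isolated_zero g1 g2 z) /\
    exists ms : seq nat,
      size ms = size s /\
      (forall k, (k < size s)%N -> has_mult g1 g2 (nth (0, 0) s k) (nth 0%N ms k)) /\
      sumn ms = n.

Definition conv (S : set (nat * nat)) : set (R * R) :=
  [set z | exists l : seq ((nat * nat) * R),
      (forall x, x \in l -> S x.1 /\ 0 <= x.2) /\
      \sum_(x <- l) x.2 = 1 /\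
      z = (\sum_(x <- l) x.2 * (x.1.1)%:R, \sum_(x <- l) x.2 * (x.1.2)%:R)].

Definition minkowski (A B : set (R * R)) : set (R * R) :=
  [set z | exists a b, A a /\ B b /\ z = (a.1 + b.1, a.2 + b.2)].

Definition vol (A : set (R * R)) : \bar R :=
  ((@lebesgue_measure R \x @lebesgue_measure R) A)%E.

Definition mixed_vol (B1 B2 : set (nat * nat)) : \bar R :=
  (vol (minkowski (conv B1) (conv B2)) - vol (conv B1) - vol (conv B2))%E.

Definition dotp (a : R * R) (s : nat * nat) : R := a.1 * (s.1)%:R + a.2 * (s.2)%:R.

Definition face (S : set (nat * nat)) (a : R * R) : set (nat * nat) :=
  [set s | S s /\ forall t, S t -> dotp a s <= dotp a t].

Definition supports (A1 A2 : set (nat * nat)) (a : R * R)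
  (G1 G2 : set (nat * nat)) : Prop := G1 = face A1 a /\ G2 = face A2 a.

Definition is_face A1 A2 (G1 G2 : set (nat * nat)) : Prop :=
  exists a, supports A1 A2 a G1 G2.

Definition origin_face (G1 G2 : set (nat * nat)) : Prop := G1 (0, 0)%N /\ G2 (0, 0)%N.
Definition semi_origin_face (G1 G2 : set (nat * nat)) : Prop := G1 (0, 0)%N \/ G2 (0, 0)%N.

Definition coordinate_face A1 A2 (G1 G2 : set (nat * nat)) : Prop :=
  forall a, supports A1 A2 a G1 G2 ->
    (0 < a.1 /\ a.2 = 0) \/ (a.1 = 0 /\ 0 < a.2).

Definition nonorigin_point (G : set (nat * nat)) : Prop :=
  exists p, p <> (0, 0)%N /\ G = [set p].

Definition relevant_face A1 A2 (G1 G2 : set (nat * nat)) : Prop :=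
  is_face A1 A2 G1 G2 /\ semi_origin_face G1 G2 /\
  ~ coordinate_face A1 A2 G1 G2 /\ ~ nonorigin_point G1 /\ ~ nonorigin_point G2.

Definition left_face A1 A2 (G1 G2 : set (nat * nat)) : Prop :=
  relevant_face A1 A2 G1 G2 /\
  forall a, supports A1 A2 a G1 G2 -> 0 < a.1 /\ a.2 < 0.

Definition right_face A1 A2 (G1 G2 : set (nat * nat)) : Prop :=
  relevant_face A1 A2 G1 G2 /\
  forall a, supports A1 A2 a G1 G2 -> a.1 < 0 /\ 0 < a.2.

(* dim conv(G) = 1: at least two distinct points, all collinear *)
Definition dim1 (G : set (nat * nat)) : Prop :=
  exists p q, G p /\ G q /\ p <> q /\
    forall r, G r ->
      ((r.1%:Z - p.1%:Z) * (q.2%:Z - p.2%:Z) = (r.2%:Z - p.2%:Z) * (q.1%:Z - p.1%:Z))%R.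

Definition long_face (G1 G2 : set (nat * nat)) : Prop := dim1 G1 /\ dim1 G2.

Definition dominant (f1 f2 : poly2) : Prop :=
  forall h : poly2, h != 0 -> exists z, ev2 h (ev2 f1 z, ev2 f2 z) != 0.

Definition non_proper (f1 f2 : poly2) : Prop :=
  exists (y : C * C) (xs : nat -> C * C),
    (forall M : nat, exists K, forall k, (K <= k)%N ->
        M%:R < `|(xs k).1| + `|(xs k).2|) /\
    (forall eps : C, 0 < eps -> exists K, forall k, (K <= k)%N ->
        `|ev2 f1 (xs k) - y.1| + `|ev2 f2 (xs k) - y.2| < eps).

Definition count_is_mixed_vol (g1 g2 : poly2) (B1 B2 : set (nat * nat)) : Prop :=
  exists n : nat, n_isolated_sols g1 g2 n /\ ((n%:R)%:E = mixed_vol B1 B2)%E.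

Definition generically_non_proper (f1 f2 : poly2) : Prop :=
  dominant f1 f2 /\ non_proper f1 f2 /\
  in_torus (ev2 f1 (0, 0), ev2 f2 (0, 0)) /\
  count_is_mixed_vol f1 f2 (supp2 f1) (supp2 f2) /\
  count_is_mixed_vol f1 (jac f1 f2) (supp2 f1) (supp2 (jac f1 f2)) /\
  count_is_mixed_vol f2 (jac f1 f2) (supp2 f2) (supp2 (jac f1 f2)).

End Defs.

(* Main.v *)
Require Import Defs.
From mathcomp Require Import all_boot all_order all_algebra.
From mathcomp Require Import complex.
From mathcomp Require Import all_classical all_reals all_analysis.
From mathcomp Require Import ring lra.
Import Order.TTheory GRing.Theory Num.Theory.
Local Open Scope ring_scope.
Local Open Scope classical_set_scope.

Set Implicit Arguments.
Section Aux.
Variable R : realType.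

Lemma dot0 (a : R * R) : dotp a (0, 0)%N = 0.
Proof. by rewrite /dotp /= !mulr0 addr0. Qed.

Lemma face_scale (A : set (nat * nat)) (a : R * R) t :
  0 < t -> face A (t * a.1, t * a.2) = face A a.
Proof.
move=> t0; apply/seteqP; split => s /= [As Hs]; split => // u /Hs;
  by rewrite /dotp /= -!mulrA -!mulrDr (ler_pM2l t0).
Qed.

Lemma face_single (A : set (nat * nat)) (g : R * R) :
  A (0, 0)%N -> (forall p, A p -> p <> (0, 0)%N -> 0 < dotp g p) ->
  face A g = [set (0, 0)%N].
Proof.
move=> A0 Hg; apply/seteqP; split => s /=.
  move=> [As Hs]; have [//|ns] := eqVneq s (0, 0)%N; exfalso; move/eqP: ns => ns.
  by have := Hs _ A0; rewrite dot0 leNgt (Hg _ As ns).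
move=> ->; split => // t At; rewrite dot0.
have [->|nt] := eqVneq t (0, 0)%N; first by rewrite dot0.
exact/ltW/Hg/eqP.
Qed.

Lemma nz_pos (p : nat * nat) : p <> (0, 0)%N ->
  0 < (p.1)%:R :> R \/ ((p.1)%:R = 0 :> R /\ 0 < (p.2)%:R :> R).
Proof.
case: p => [[|i] [|j]] /= H; first by exfalso; apply: H.
- by right; rewrite ltr0n.
- by left; rewrite ltr0n.
- by left; rewrite ltr0n.
Qed.

Lemma natR_ge0 (n : nat) : 0 <= n%:R :> R.
Proof. exact: ler0n. Qed.

Lemma on_line (A : set (nat * nat)) (a : R * R) r :
  face A a r -> face A a (0, 0)%N -> dotp a r = 0.
Proof.
move=> [Ar Hr] [A0 H0]; have := Hr _ A0; have := H0 _ Ar.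
rewrite dot0 => h1 h2; apply/eqP; rewrite eq_le h1 h2 //.
Qed.

Lemma key_id (a b : R * R) (p : nat * nat) :
  a.2 ^+ 2 * dotp b p =
  a.2 * (a.2 * b.1 - a.1 * b.2) * (p.1)%:R + a.2 * b.2 * dotp a p.
Proof. rewrite /dotp; ring. Qed.

Lemma core (A1 A2 : set (nat * nat)) (a b : R * R) G1 G2 H1 H2 r1 r2 :
  supports A1 A2 a G1 G2 -> supports A1 A2 b H1 H2 ->
  G1 (0, 0)%N -> G2 (0, 0)%N -> G1 r1 -> G2 r2 ->
  r1 <> (0, 0)%N -> r2 <> (0, 0)%N ->
  a.1 * a.2 < 0 -> 0 < a.2 * b.2 ->
  semi_origin_face H1 H2 -> ~ supports A1 A2 ((1, 1) : R * R) H1 H2 ->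
  H1 = G1 /\ H2 = G2.
Proof.
move=> [eG1 eG2] [eH1 eH2] G10 G20 G1r G2r nr1 nr2 aa ab sH nsH.
have a2n : a.2 != 0 by apply/eqP => h; move: aa; rewrite h mulr0 ltxx.
have a2sq : 0 < a.2 ^+ 2 by rewrite lt_def sqrf_eq0 a2n sqr_ge0.
set D := a.2 * (a.2 * b.1 - a.1 * b.2).
have line : forall (A : set (nat * nat)) G r, G = face A a -> G (0, 0)%N -> G r ->
    r <> (0, 0)%N -> a.2 ^+ 2 * dotp b r = D * (r.1)%:R /\ 0 < (r.1)%:R :> R.
  move=> A G r eG G0 Gr nr; rewrite eG in G0 Gr.
  have dz := on_line Gr G0.
  split; first by rewrite key_id dz mulr0 addr0.
  case: (nz_pos nr) => // [[e1 e2]]; move: dz; rewrite /dotp e1 mulr0 add0r => /eqP.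
  by rewrite mulf_eq0 (negPf a2n) /= => /eqP e; rewrite e ltxx in e2.
have A10 : A1 (0, 0)%N by move: G10; rewrite eG1 => -[].
have A20 : A2 (0, 0)%N by move: G20; rewrite eG2 => -[].
case: (ltgtP D 0) => hD.
- (* D < 0 : origin not in H *)
  have neg : forall (A : set (nat * nat)) G H r, G = face A a -> H = face A b ->
      G (0, 0)%N -> G r -> r <> (0, 0)%N -> ~ H (0, 0)%N.
    move=> A G H r eG eH G0 Gr nr; have [e p] := line A G r eG G0 Gr nr.
    have Ar : A r by move: Gr; rewrite eG => -[].
    rewrite eH => -[_ /(_ _ Ar)]; rewrite dot0 => h.
    have : a.2 ^+ 2 * dotp b r >= 0 by rewrite mulr_ge0 // ltW.
    by rewrite e leNgt pmulr_llt0 // hD.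
  by exfalso; case: sH => h;
    [exact: (neg _ _ _ _ eG1 eH1 G10 G1r nr1 h) | exact: (neg _ _ _ _ eG2 eH2 G20 G2r nr2 h)].
- (* D > 0 : H is the vertex *)
  have pos : forall (A : set (nat * nat)) G, G = face A a -> G (0, 0)%N ->
      face A b = [set (0, 0)%N] /\ face A ((1, 1) : R * R) = [set (0, 0)%N].
    move=> A G eG G0; have A0 : A (0, 0)%N by move: G0; rewrite eG => -[].
    have ga : forall p, A p -> 0 <= dotp a p.
      by move=> p Ap; move: G0; rewrite eG => -[_ /(_ _ Ap)]; rewrite dot0.
    split; apply: face_single => // p Ap np; last first.
      rewrite /dotp /= !mul1r; case: (nz_pos np) => [h|[-> h]].
        by rewrite ltr_pwDl // natR_ge0.
      by rewrite add0r.
    have := ga _ Ap; case: (nz_pos np) => [h|[h1 h2]] gp.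
      have : 0 < a.2 ^+ 2 * dotp b p.
        rewrite key_id -/D; have := mulr_gt0 hD h; have := mulr_ge0 (ltW ab) gp; lra.
      by rewrite pmulr_rgt0.
    move: gp; rewrite /dotp h1 !mulr0 !add0r => gp.
    have a2p : 0 < a.2 by rewrite lt_neqAle eq_sym a2n /= -(pmulr_lge0 _ h2).
    have b2p : 0 < b.2 by rewrite -(pmulr_rgt0 _ a2p).
    by rewrite mulr_gt0.
  have [e1 f1] := pos _ _ eG1 G10; have [e2 f2] := pos _ _ eG2 G20.
  by exfalso; apply: nsH; split; [rewrite eH1 e1 f1 | rewrite eH2 e2 f2].
- (* D = 0 : b is a positive multiple of a *)
  have t0 : 0 < b.2 / a.2.
    have -> : b.2 / a.2 = (a.2 * b.2) / a.2 ^+ 2 by field.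
    by rewrite divr_gt0.
  have eb : b = (b.2 / a.2 * a.1, b.2 / a.2 * a.2).
    move: hD; rewrite /D => /eqP; rewrite mulf_eq0 (negPf a2n) /= subr_eq0 => /eqP h.
    clear -h a2n; case: b h => b1 b2 /= h; congr (_, _); last by rewrite divfK.
    by apply: (mulfI a2n); rewrite h; field.
  by rewrite eH1 eH2 eG1 eG2 eb !face_scale.
Qed.

Lemma nz_of_dim1 (G : set (nat * nat)) : dim1 G -> exists r, G r /\ r <> (0, 0)%N.
Proof.
move=> [p [q [Gp [Gq [pq _]]]]].
have [ep|np] := eqVneq p (0, 0)%N.
  by exists q; split => // eq; apply: pq; rewrite ep eq.
by exists p; split => //; apply/eqP.
Qed.

Lemma gen (A1 A2 : set (nat * nat)) G1 G2 H1 H2 (P : R * R -> Prop) :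
  (forall a, P a -> a.1 * a.2 < 0) ->
  (forall a b, P a -> P b -> 0 < a.2 * b.2) ->
  ~ P (1, 1) ->
  long_face G1 G2 -> origin_face G1 G2 ->
  is_face R A1 A2 G1 G2 -> (forall a, supports A1 A2 a G1 G2 -> P a) ->
  is_face R A1 A2 H1 H2 -> semi_origin_face H1 H2 ->
  (forall a, supports A1 A2 a H1 H2 -> P a) ->
  H1 = G1 /\ H2 = G2.
Proof.
move=> P1 P2 P3 [d1 d2] [G10 G20] [a sa] Pa [b sb] sH Pb.
have [r1 [G1r nr1]] := nz_of_dim1 d1.
have [r2 [G2r nr2]] := nz_of_dim1 d2.
apply: (core sa sb G10 G20 G1r G2r nr1 nr2).
- exact: P1 (Pa _ sa).
- exact: P2 (Pa _ sa) (Pb _ sb).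
- exact: sH.
- by move=> /Pb.
Qed.
End Aux.

Theorem lemma7p1 (R : realType) (f1 f2 : poly2 R) :
  generically_non_proper f1 f2 ->
  forall G1 G2 : set (nat * nat),
    long_face G1 G2 -> origin_face G1 G2 ->
    (right_face R (supp2 f1) (supp2 f2) G1 G2 ->
       forall H1 H2, right_face R (supp2 f1) (supp2 f2) H1 H2 -> H1 = G1 /\ H2 = G2) /\
    (left_face R (supp2 f1) (supp2 f2) G1 G2 ->
       forall H1 H2, left_face R (supp2 f1) (supp2 f2) H1 H2 -> H1 = G1 /\ H2 = G2).
Proof.
move=> _ G1 G2 lG oG; split.
- move=> [[fG _] rG] H1 H2 [[fH [sH _]] rH].
  apply: (@gen R _ _ _ _ _ _ (fun a : R * R => a.1 < 0 /\ 0 < a.2)) lG oG fG rG fH sH rH.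
  + by move=> a [h1 h2]; rewrite nmulr_rlt0.
  + by move=> a b [_ h1] [_ h2]; rewrite mulr_gt0.
  + by move=> /= [h _]; rewrite ltr10 in h.
- move=> [[fG _] rG] H1 H2 [[fH [sH _]] rH].
  apply: (@gen R _ _ _ _ _ _ (fun a : R * R => 0 < a.1 /\ a.2 < 0)) lG oG fG rG fH sH rH.
  + by move=> a [h1 h2]; rewrite pmulr_rlt0.
  + by move=> a b [_ h1] [_ h2]; rewrite nmulr_rgt0.
  + by move=> /= [_ h]; rewrite ltr10 in h.
Qed.
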